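(* Let $r\ge 2$ and $m$ be integers with $0\le 2m\le r$, $n=2r-4m$, and let $f:S^2(S^r(\mathbb{C}^2))\to S^{n}(\mathbb{C}^2)$ be an $\mathfrak{sl}_2(\mathbb{C})$-equivariant linear map, written $f=\sum_{k=0}^n q_k w_k$, with $\lambda=q_0(x_0x_{2m})\neq 0$. Then for every $0\le k\le n/2$, $$q_k(x_0x_{2m+k})=q_{n-k}(x_rx_{r-2m-k})\neq 0.$$ Moreover, if $m=0$, then for every $0\le k\le n/2$ and every $0\le i\le k$, $$q_k(x_ix_{k-i})=q_{n-k}(x_{r-i}x_{r-k+i})\neq 0.$$
   Context: $\mathfrak{sl}_2(\mathbb{C})$ has basis $X=\begin{pmatrix}0&1\\0&0\end{pmatrix}$, $H=\begin{pmatrix}1&0\\0&-1\end{pmatrix}$, $Y=\begin{pmatrix}0&0\\1&0\end{pmatrix}$, acting on the irreducible modules $S^d(\mathbb{C}^2)$. Let $x_0\in S^r(\mathbb{C}^2)$ be a highest weight vector and $x_i=Y^ix_0/i!$ ($0\le i\le r$), so $Yx_i=(i+1)x_{i+1}$, $Xx_i=(r-i+1)x_{i-1}$, $Hx_i=(r-2i)x_i$. Let $w_0\in S^n(\mathbb{C}^2)$ be a highest weight vector and $w_k=Y^kw_0/k!$ ($0\le k\le n$). Writing $f=\sum_{k=0}^n q_kw_k$ means $f(u)=\sum_k q_k(u)w_k$ for linear forms $q_k$ on $S^2(S^r(\mathbb{C}^2))$; $q_k(x_ix_j)$ is the value on the product $x_ix_j$. *)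

(* Defs.v *)
From mathcomp Require Import all_boot all_order all_algebra.
Set Implicit Arguments. Unset Strict Implicit. Unset Printing Implicit Defensive.
Import Order.TTheory GRing.Theory Num.Theory.
Local Open Scope ring_scope.

(* Encoding of a linear map f : S^2(S^r(C^2)) -> S^n(C^2), f = sum_k q_k w_k,
   by its coefficient table  F i j k = q_k(x_i x_j)  (0 <= i,j <= r, 0 <= k <= n).
   Since {x_i x_j | i <= j} is a basis of S^2(S^r(C^2)) and x_i x_j = x_j x_i,
   linear maps f correspond exactly to tables that are symmetric in (i,j). *)

Definition sym_table (C : numClosedFieldType) (r : nat)
    (F : nat -> nat -> nat -> C) : Prop :=
  forall i j k, (i <= r)%N -> (j <= r)%N -> F i j k = F j i k.

(* sl_2-equivariance, checked on the spanning products x_i x_j, using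
   Y x_i = (i+1) x_{i+1} (x_{r+1} = 0),   X x_i = (r-i+1) x_{i-1} (x_{-1} = 0),
   H x_i = (r-2i) x_i, Y acting on S^2 as a derivation, and on the target
   Y w_k = (k+1) w_{k+1}, X w_k = (n-k+1) w_{k-1}, H w_k = (n-2k) w_k.
   Each equation is the coefficient of w_k (0 <= k <= n) of
   f(A (x_i x_j)) = A f(x_i x_j), for A in {Y, X, H}. *)
Definition sl2_equivariant (C : numClosedFieldType) (r n : nat)
    (F : nat -> nat -> nat -> C) : Prop :=
  forall i j k, (i <= r)%N -> (j <= r)%N -> (k <= n)%N ->
  [/\
      (if (i < r)%N then (i.+1)%:R * F i.+1 j k else 0) +
      (if (j < r)%N then (j.+1)%:R * F i j.+1 k else 0)
        = k%:R * F i j k.-1,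
      (if (0 < i)%N then (r - i).+1%:R * F i.-1 j k else 0) +
      (if (0 < j)%N then (r - j).+1%:R * F i j.-1 k else 0)
        = (n - k)%:R * F i j k.+1
    &
      ((r%:R - 2 * i%:R) + (r%:R - 2 * j%:R)) * F i j k
        = (n%:R - 2 * k%:R) * F i j k ].

(* Main.v *)
Require Import Defs.
From mathcomp Require Import all_boot all_order all_algebra.
From mathcomp Require Import zify ring.
Import GRing.Theory Num.Theory.
Local Open Scope ring_scope.

Lemma cancelr (C : numClosedFieldType) (x y c : C) :
  c != 0 -> (x - y) * c = 0 -> x = y.
Proof.
move=> nz /eqP; rewrite mulf_eq0 (negbTE nz) orbF subr_eq0 => /eqP //.
Qed.

Lemma natr_nz (C : numClosedFieldType) (k : nat) : (0 < k)%N -> (k%:R : C) != 0.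
Proof. by move=> h; rewrite pnatr_eq0 -lt0n. Qed.

Lemma A1 (C : numClosedFieldType) (l P0 P1 b1 b1' b2 b2' a c2 jp1 : C) :
  a * P0 = c2 * P1 -> jp1 * b1' = a * b1 -> jp1 * b2' = c2 * b2 ->
  P0 * b2 = l * b1 -> jp1 != 0 -> P1 * b2' = l * b1'.
Proof.
move=> d1 d2 d3 d4 nz; apply: (@cancelr _ _ _ _ nz).
move/eqP: d1; rewrite -subr_eq0 => /eqP d1.
move/eqP: d2; rewrite -subr_eq0 => /eqP d2.
move/eqP: d3; rewrite -subr_eq0 => /eqP d3.
move/eqP: d4; rewrite -subr_eq0 => /eqP d4.
have -> : (P1 * b2' - l * b1') * jp1 =
  P1 * (jp1 * b2' - c2 * b2) - l * (jp1 * b1' - a * b1)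
  - b2 * (a * P0 - c2 * P1) + a * (P0 * b2 - l * b1) by ring.
by rewrite d1 d2 d3 d4; ring.
Qed.

Lemma A2 (C : numClosedFieldType) (l P' Pa P0 b2' b2 b1i b1i' b1j b1j'
   ip1 jp1 Kp1 ri rj rK : C) :
  ip1 * P' + jp1 * Pa = Kp1 * P0 ->
  Pa * b2' = l * b1i * b1j' -> P0 * b2 = l * b1i * b1j ->
  ip1 * b1i' = ri * b1i -> jp1 * b1j' = rj * b1j -> Kp1 * b2' = rK * b2 ->
  ri + rj = rK -> ip1 != 0 -> P' * b2' = l * b1i' * b1j.
Proof.
move=> de da d0 di dj dK dn nz; apply: (@cancelr _ _ _ _ nz).
move/eqP: de; rewrite -subr_eq0 => /eqP de.
move/eqP: da; rewrite -subr_eq0 => /eqP da.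
move/eqP: d0; rewrite -subr_eq0 => /eqP d0.
move/eqP: di; rewrite -subr_eq0 => /eqP di.
move/eqP: dj; rewrite -subr_eq0 => /eqP dj.
move/eqP: dK; rewrite -subr_eq0 => /eqP dK.
move/eqP: dn; rewrite -subr_eq0 => /eqP dn.
have -> : (P' * b2' - l * b1i' * b1j) * ip1 =
  b2' * (ip1 * P' + jp1 * Pa - Kp1 * P0) - jp1 * (Pa * b2' - l * b1i * b1j')
  - l * b1i * (jp1 * b1j' - rj * b1j) + P0 * (Kp1 * b2' - rK * b2)
  + rK * (P0 * b2 - l * b1i * b1j) - l * b1j * (ip1 * b1i' - ri * b1i)
  - l * b1i * b1j * (ri + rj - rK) by ring.
by rewrite de da d0 di dj dK dn; ring.
Qed.

Arguments A1 {C l P0 P1 b1 b1' b2 b2' a c2 jp1}.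
Arguments A2 {C l P' Pa P0 b2' b2 b1i b1i' b1j b1j' ip1 jp1 Kp1 ri rj rK}.

Lemma gen (C : numClosedFieldType) (r : nat) (P : nat -> nat -> C) :
 (forall j, (j < r)%N -> (r-j)%:R * P 0%N j = (2 * r-j)%:R * P 0%N j.+1) ->
 (forall i j, (i+j < r)%N ->
    i.+1%:R * P i.+1 j + j.+1%:R * P i j.+1 = (i+j).+1%:R * P i j) ->
 forall i j, (i + j <= r)%N ->
   P i j * ('C(2 * r, i+j))%:R = P 0%N 0%N * ('C(r,i))%:R * ('C(r,j))%:R.
Proof.
move=> R1 R2.
have base: forall j, (j <= r)%N ->
    P 0%N j * ('C(2 * r, j))%:R = P 0%N 0%N * ('C(r,0))%:R * ('C(r,j))%:R.
  elim=> [|j IH] hj; first by rewrite !bin0; ring.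
  apply: (A1 (a := (r-j)%:R) (c2 := (2 * r-j)%:R) (jp1 := j.+1%:R)
             (b1 := ('C(r,j))%:R) (b2 := ('C(2 * r,j))%:R)).
  - exact: R1.
  - by rewrite -!natrM mul_bin_left.
  - by rewrite -!natrM mul_bin_left.
  - apply: IH; lia.
  - exact: natr_nz.
elim=> [|i IH] j hij; first exact: base.
rewrite addSn.
apply: (A2 (Pa := P i j.+1) (P0 := P i j) (b2 := ('C(2 * r,i+j))%:R)
   (b1i := ('C(r,i))%:R) (b1j' := ('C(r,j.+1))%:R)
   (ip1 := i.+1%:R) (jp1 := j.+1%:R) (Kp1 := (i+j).+1%:R)
   (ri := (r-i)%:R) (rj := (r-j)%:R) (rK := (2 * r-(i+j))%:R)).
- apply: R2; lia.
- rewrite -addnS; apply: IH; lia.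
- apply: IH; lia.
- by rewrite -!natrM mul_bin_left.
- by rewrite -!natrM mul_bin_left.
- by rewrite -!natrM mul_bin_left.
- rewrite -natrD; congr (_%:R); lia.
- exact: natr_nz.
Qed.

Theorem mainTheorem6 (C : numClosedFieldType) (r m n : nat)
    (F : nat -> nat -> nat -> C) :
  (2 <= r)%N -> (2 * m <= r)%N -> n = (2 * r - 4 * m)%N ->
  sym_table r F -> sl2_equivariant r n F ->
  F 0%N (2 * m)%N 0%N != 0 ->
  (forall k, (2 * k <= n)%N ->
     F 0%N (2 * m + k)%N k = F r (r - 2 * m - k)%N (n - k)%N
     /\ F 0%N (2 * m + k)%N k != 0)
  /\
  (m = 0%N -> forall k i, (2 * k <= n)%N -> (i <= k)%N ->
     F i (k - i)%N k = F (r - i)%N (r - k + i)%N (n - k)%N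
     /\ F i (k - i)%N k != 0).
Proof.
move=> hr hm hn sym eqv hl.
have Xa : forall k, (k < r - 2 * m)%N ->
    (r-2 * m-k)%:R * F 0%N (2 * m+k)%N k = (n-k)%:R * F 0%N (2 * m+k.+1)%N k.+1.
  move=> k hk; have [_ h _] := eqv 0%N (2 * m+k)%N.+1 k (leq0n _) ltac:(lia) ltac:(lia).
  rewrite addnS; move: h; rewrite /= add0r => <-.
  congr (_ * _); congr (_%:R); lia.
have Yb : forall k, (k < r - 2 * m)%N ->
    (r-2 * m-k)%:R * F r (r-2 * m-k)%N (n-k)%N
    = (n-k)%:R * F r (r-2 * m-k.+1)%N (n-k.+1)%N.
  move=> k hk; have [h _ _] := eqv r (r-2 * m-k.+1)%N (n-k)%N (leqnn r) ltac:(lia) ltac:(lia).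
  move: h; rewrite ltnn add0r (_ : (r - 2 * m - k.+1 < r)%N); last by lia.
  rewrite (_ : (r - 2 * m - k.+1).+1 = r-2 * m-k)%N; last by lia.
  rewrite (_ : (n - k).-1 = n-k.+1)%N; last by lia.
  done.
have NZ : forall k, (k <= r-2 * m)%N -> F 0%N (2 * m+k)%N k != 0.
  elim=> [|k IH] hk; first by rewrite addn0.
  apply/eqP => h0; have := Xa k ltac:(lia); rewrite h0 mulr0 => /eqP.
  by rewrite mulf_eq0 (negbTE (IH ltac:(lia))) orbF (negbTE (@natr_nz C (r-2 * m-k)%N ltac:(lia))).
have EQ : forall d k, (k + d = r-2 * m)%N ->
    F 0%N (2 * m+k)%N k = F r (r-2 * m-k)%N (n-k)%N.
  elim=> [|d IH] k hk.
    have -> : k = (r-2 * m)%N by lia.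
    rewrite (_ : 2 * m + (r-2 * m) = r)%N; last by lia.
    rewrite (_ : r - 2 * m - (r-2 * m) = 0)%N; last by lia.
    rewrite (_ : n - (r-2 * m) = r-2 * m)%N; last by lia.
    apply: sym; lia.
  apply: (mulIf (natr_nz C (r - 2 * m - k)%N ltac:(lia))).
  rewrite [LHS]mulrC [RHS]mulrC Xa; last by lia.
  rewrite Yb; last by lia.
  rewrite IH //; lia.
have P1 : forall k, (k <= r - 2 * m)%N ->
     F 0%N (2 * m + k)%N k = F r (r - 2 * m - k)%N (n - k)%N
     /\ F 0%N (2 * m + k)%N k != 0.
  move=> k hk; split; [apply: (EQ (r-2 * m-k)%N); lia | exact: NZ].
split; first by move=> k hk; apply: P1; lia.
move=> m0 k i hk hik; subst m.
have n2 : n = (2 * r)%N by lia.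
have GP : forall i j, (i+j <= r)%N -> F i j (i+j)%N * ('C(2 * r, i+j))%:R
    = F 0%N 0%N (0+0)%N * ('C(r,i))%:R * ('C(r,j))%:R.
  apply: (@gen C r (fun a b => F a b (a+b)%N)).
  - move=> j hj /=; have [_ h _] := eqv 0%N j.+1 j (leq0n _) ltac:(lia) ltac:(lia).
    rewrite !add0n; move: h; rewrite /= add0r n2 => <-.
    congr (_ * _); congr (_%:R); lia.
  - move=> a b hab /=; have [h _ _] := eqv a b (a+b)%N.+1 ltac:(lia) ltac:(lia) ltac:(lia).
    move: h; rewrite (_ : (a < r)%N); last by lia.
    rewrite (_ : (b < r)%N); last by lia.
    by rewrite addSn addnS.
have GQ : forall i j, (i+j <= r)%N ->
    F (r-i)%N (r-j)%N (2 * r-(i+j))%N * ('C(2 * r, i+j))%:R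
    = F (r-0)%N (r-0)%N (2 * r-(0+0))%N * ('C(r,i))%:R * ('C(r,j))%:R.
  apply: (@gen C r (fun a b => F (r-a)%N (r-b)%N (2 * r-(a+b))%N)).
  - move=> j hj /=.
    have [h _ _] := eqv r (r-j.+1)%N (2 * r-j)%N (leqnn r) ltac:(lia) ltac:(lia).
    move: h; rewrite ltnn add0r (_ : (r - j.+1 < r)%N); last by lia.
    rewrite (_ : (r - j.+1).+1 = r-j)%N; last by lia.
    rewrite (_ : (2 * r - j).-1 = 2 * r-j.+1)%N; last by lia.
    by rewrite subn0 !add0n.
  - move=> a b hab /=.
    have [_ h _] := eqv (r-a)%N (r-b)%N (2 * r-(a+b).+1)%N ltac:(lia) ltac:(lia) ltac:(lia).
    move: h; rewrite (_ : (0 < r-a)%N); last by lia.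
    rewrite (_ : (0 < r-b)%N); last by lia.
    rewrite (_ : (r - (r-a)).+1 = a.+1)%N; last by lia.
    rewrite (_ : (r - (r-b)).+1 = b.+1)%N; last by lia.
    rewrite (_ : (r - a).-1 = r - a.+1)%N; last by lia.
    rewrite (_ : (r - b).-1 = r - b.+1)%N; last by lia.
    rewrite (_ : (n - (2 * r - (a+b).+1))%N = (a+b).+1)%N; last by lia.
    rewrite (_ : (2 * r - (a+b).+1).+1 = 2 * r - (a+b))%N; last by lia.
    by rewrite addSn addnS.
have l0 : F 0%N 0%N 0%N = F r r (2 * r)%N.
  have [e _] := P1 0%N (leq0n _).
  by move: e; rewrite muln0 addn0 !subn0 n2.
have bnz : ('C(2 * r, k))%:R != 0 :> C by apply: natr_nz; rewrite bin_gt0; lia.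
have GP' := GP i (k-i)%N ltac:(lia).
have GQ' := GQ i (k-i)%N ltac:(lia).
rewrite (subnKC hik) in GP' GQ'.
rewrite n2 (_ : r - k + i = r - (k-i))%N; last by lia.
have E : F i (k-i)%N k = F (r - i)%N (r - (k - i))%N (2 * r - k)%N.
  apply: (mulIf bnz); rewrite GP' GQ' subn0 add0n subn0 -l0 //.
split => //.
have b1 : forall j, (j <= r)%N -> ('C(r,j))%:R != 0 :> C.
  by move=> j hj; apply: natr_nz; rewrite bin_gt0.
have hl' : F 0%N 0%N 0%N != 0 by [].
apply/eqP => h0; move: GP'; rewrite h0 mul0r add0n => /esym/eqP.
rewrite !mulf_eq0 (negbTE hl') (negbTE (b1 i ltac:(lia))) (negbTE (b1 (k-i)%N ltac:(lia))).
done.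
Qed.
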